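(* Let $G$ be a graph obtained as follows: start with a connected bipartite graph (the core) with bipartition $X\sqcup Y$, $X=\{x_1,\dots,x_n\}$, $Y=\{y_1,\dots,y_m\}$, $n,m\ge 1$; attach $f_i\ge 1$ leaves (new degree-one vertices adjacent only to $x_i$) to each $x_i$; and attach $t_j\ge 0$ pendant triangles to each $y_j$ (a pendant triangle at $y_j$ consists of two new vertices $u,v$ with edges $\{y_j,u\},\{y_j,v\},\{u,v\}$). Let $T=\sum_{j=1}^m t_j$. Then $P_G(-1)=(-1)^{n+T}\in\{\pm1\}$. In particular, $\mathfrak a(G)=0$.
   Context: The independence polynomial of a graph $G$ is $P_G(x)=\sum_i g_ix^i$, where $g_i$ is the number of independent sets of size $i$. For $G$ on vertex set $[N]$, let $S=K[x_1,\dots,x_N]$ ($K$ a field), $I(G)$ the edge ideal generated by $x_ix_j$ for edges $\{i,j\}$, and $\alpha(G)$ the independence number (equal to $\dim S/I(G)$). Writing the Hilbert series of $S/I(G)$ uniquely as $h_G(t)/(1-t)^{\alpha(G)}$ with $h_G(t)$ a polynomial with nonzero leading coefficient, the $\mathfrak a$-invariant is $\mathfrak a(G)=\deg h_G(t)-\alpha(G)$. *)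

(* Defs.v *)
From HB Require Import structures.
From mathcomp Require Import all_boot all_order all_algebra.
Set Implicit Arguments. Unset Strict Implicit. Unset Printing Implicit Defensive.
Import Order.TTheory GRing.Theory Num.Theory.
Local Open Scope ring_scope.

Definition indep (V : finType) (adj : rel V) (S : {set V}) : bool :=
  [forall u in S, forall v in S, ~~ adj u v].

Definition indep_count (V : finType) (adj : rel V) (i : nat) : nat :=
  #|[set S : {set V} | indep adj S & (#|S| == i)%N]|.

Definition indep_poly (V : finType) (adj : rel V) : {poly int} :=
  \poly_(i < #|V|.+1) (indep_count adj i)%:Z.

Definition indep_number (V : finType) (adj : rel V) : nat :=
  (\max_(S : {set V} | indep adj S) #|S|)%N.

(* Hilbert function of S/I(G) in degree d: S/I(G) is a monomial quotient, so
   its degree-d component has as K-basis the degree-d monomials x^a not in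
   I(G), i.e. those with no edge {u,v} such that x_u x_v divides x^a.
   Exponent vectors of degree d have entries <= d, hence the 'I_d.+1 range. *)
Definition hilb_fun (V : finType) (adj : rel V) (d : nat) : nat :=
  #|[set a : {ffun V -> 'I_d.+1} |
      (\sum_(v : V) (a v : nat) == d)%N &&
      [forall u, forall v, adj u v ==> ((a u == 0 :> nat) || (a v == 0 :> nat))]]|.

(* Coefficients of h_G(t) = HS(t) * (1-t)^alpha, where HS(t) = sum_d H(d) t^d. *)
Definition hcoef (V : finType) (adj : rel V) (k : nat) : int :=
  let al := indep_number adj in
  \sum_(i < al.+1 | (i <= k)%N)
     ((-1) ^+ i * ('C(al, i))%:Z * (hilb_fun adj (k - i))%:Z)%R.

Definition is_ainv (V : finType) (adj : rel V) (a : int) : Prop :=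
  exists D : nat, hcoef adj D != 0%R /\ (forall k, (D < k)%N -> hcoef adj k = 0%R)
                  /\ a = (D%:Z - (indep_number adj)%:Z)%R.

Definition core_adj (n m : nat) (c : 'I_n -> 'I_m -> bool) : rel ('I_n + 'I_m) :=
  fun u v => match u, v with
             | inl x, inr y => c x y
             | inr y, inl x => c x y
             | _, _ => false
             end.

Definition core_connected (n m : nat) (c : 'I_n -> 'I_m -> bool) : Prop :=
  forall u v : 'I_n + 'I_m, connect (core_adj c) u v.

(* Vertices: X, Y, leaves (i,k) with k < f i attached to x_i, and triangle
   vertices ((j,k),b) with k < t j, b : bool (the two new vertices u,v of the
   k-th pendant triangle at y_j). *)
Definition gV (n m : nat) (f : 'I_n -> nat) (t : 'I_m -> nat) : finType :=
  ('I_n + 'I_m + {i : 'I_n & 'I_(f i)} + ({j : 'I_m & 'I_(t j)} * bool))%type.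

Definition gadj0 (n m : nat) (c : 'I_n -> 'I_m -> bool)
    (f : 'I_n -> nat) (t : 'I_m -> nat) : rel (gV f t) :=
  fun u v => match u, v with
             | inl (inl (inl x)), inl (inl (inr y)) => c x y
             | inl (inl (inl x)), inl (inr l) => tag l == x
             | inl (inl (inr y)), inr (s, _) => tag s == y
             | inr (s, false), inr (s', true) => s == s'
             | _, _ => false
             end.

Definition gadj (n m : nat) (c : 'I_n -> 'I_m -> bool)
    (f : 'I_n -> nat) (t : 'I_m -> nat) : rel (gV f t) :=
  fun u v => gadj0 c u v || gadj0 c v u.
Arguments gadj {n m} c f t.
Arguments gV {n m} f t.

(* Main.v *)
Require Import Defs.
From HB Require Import structures.
From mathcomp Require Import all_boot all_order all_algebra.
Import Order.TTheory GRing.Theory Num.Theory.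
From mathcomp Require Import ring.
Open Scope ring_scope.

Definition eqmod (N : nat) (p q : {poly int}) := exists r, p = q + 'X^N * r.

Lemma eqmod_refl N p : eqmod N p p.
Proof. by exists 0; rewrite mulr0 addr0. Qed.

Lemma eqmod_add N p1 q1 p2 q2 : eqmod N p1 q1 -> eqmod N p2 q2 ->
  eqmod N (p1 + p2) (q1 + q2).
Proof. by move=> [r1 ->] [r2 ->]; exists (r1 + r2); ring. Qed.

Lemma eqmod_mul N p1 q1 p2 q2 : eqmod N p1 q1 -> eqmod N p2 q2 ->
  eqmod N (p1 * p2) (q1 * q2).
Proof.
by move=> [r1 ->] [r2 ->]; exists (r1 * q2 + q1 * r2 + 'X^N * r1 * r2); ring.
Qed.

Lemma eqmod_exp N p q i : eqmod N p q -> eqmod N (p ^+ i) (q ^+ i).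
Proof.
move=> h; elim: i => [|i IH]; first by rewrite !expr0; apply: eqmod_refl.
by rewrite !exprS; apply: eqmod_mul.
Qed.

Lemma eqmod_sum N (I : finType) (P : pred I) (F G : I -> {poly int}) :
  (forall i, P i -> eqmod N (F i) (G i)) ->
  eqmod N (\sum_(i | P i) F i) (\sum_(i | P i) G i).
Proof.
move=> h; elim/big_rec2: _ => [|i y1 y2 Pi]; first exact: eqmod_refl.
by apply: eqmod_add; apply: h.
Qed.

Lemma eqmod_coef N p q e : eqmod N p q -> (e < N)%N -> p`_e = q`_e.
Proof. by move=> [r ->] he; rewrite coefD coefXnM he addr0. Qed.

Definition gp (D : nat) : {poly int} := \sum_(e < D.+1) ((e : nat) != 0%N)%:R * 'X^e.

Lemma gpS D : gp D.+1 = gp D + 'X^(D.+1).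
Proof. by rewrite /gp big_ord_recr /= mul1r. Qed.

Lemma gp0 : gp 0 = 0.
Proof. by rewrite /gp big_ord1 /= mul0r. Qed.

Lemma oneX_gp D : (1 - 'X) * gp D = 'X - 'X^(D.+1).
Proof.
elim: D => [|D IH]; first by rewrite gp0 mulr0 expr1 subrr.
rewrite gpS mulrDr IH !exprS; ring.
Qed.

Lemma pow_gp D i : eqmod D.+1 (((1 - 'X) * gp D) ^+ i) ('X ^+ i).
Proof.
apply: eqmod_exp; rewrite oneX_gp; exists (-1); ring.
Qed.

Lemma gp_mono D k : eqmod D.+1 (gp (D + k)) (gp D).
Proof.
elim: k => [|k [r IH]]; first by rewrite addn0; apply: eqmod_refl.
rewrite addnS gpS IH; exists (r + 'X^k).
by rewrite mulrDr -exprD addSn addrA.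
Qed.

Lemma coef1X b j : ((1 - 'X) ^+ b)`_j = (-1) ^+ j * ('C(b, j))%:Z.
Proof.
elim: b j => [|b IH] j.
  by rewrite expr0 coefC; case: j => [|j] //=; rewrite bin0n // mulr0.
rewrite exprS mulrBl mul1r coefB mulrC coefMX.
case: j => [|j] /=; first by rewrite subr0 IH !bin0 !expr0.
rewrite !IH binS PoszD exprS; ring.
Qed.


Lemma indepP (V : finType) (adj : rel V) (S : {set V}) :
  reflect (forall u v, u \in S -> v \in S -> ~~ adj u v) (indep adj S).
Proof.
apply: (iffP forallP) => [h u v uS vS | h u].
  by have /implyP/(_ uS)/forallP/(_ v)/implyP/(_ vS) := h u.
by apply/implyP => uS; apply/forallP => v; apply/implyP => vS; apply: h.
Qed.

Definition supp (V : finType) D (a : {ffun V -> 'I_D.+1}) : {set V} :=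
  [set v | (a v : nat) != 0%N].
Arguments supp {V D} a.

Definition HP (V : finType) (adj : rel V) D : {poly int} :=
  \sum_(a : {ffun V -> 'I_D.+1} | indep adj (supp a)) 'X^(\sum_v (a v : nat)).
Arguments HP {V} adj D.

Lemma hilb_HP (V : finType) (adj : rel V) d :
  (hilb_fun adj d)%:Z = (HP adj d)`_d.
Proof.
rewrite /HP coef_sum /hilb_fun -sum1_card.
rewrite (big_morph Posz PoszD (erefl _)) big_mkcond /= [RHS]big_mkcond /=.
apply: eq_bigr => a _; rewrite inE coefXn.
have -> : [forall u, forall v, adj u v ==> ((a u == 0 :> nat) || (a v == 0 :> nat))]
   = indep adj (supp a).
  apply/idP/indepP => [/forallP h u v | h].
    rewrite !inE => uS vS; apply/negP => auv.
    by have /forallP/(_ v)/implyP/(_ auv) := h u; rewrite (negbTE uS) (negbTE vS).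
  apply/forallP => u; apply/forallP => v; apply/implyP => auv.
  case: (boolP ((a u : nat) == 0%N)) => //= hu; apply/negPn/negP => hv.
  by have := h u v; rewrite !inE hu hv auv => /(_ isT isT).
by rewrite eq_sym andbC; case: (indep _ _); case: (_ == _).
Qed.

Lemma prod_bool (V : finType) (b : V -> bool) :
  \prod_v (b v)%:R = ([forall v, b v])%:R :> {poly int}.
Proof.
case: (boolP [forall v, b v]) => [/forallP h | /forallPn [v hv]].
  by rewrite big1 // => v _; rewrite h.
by rewrite (bigD1 v) //= (negbTE hv) mul0r.
Qed.

Lemma sum_supp (V : finType) D (S : {set V}) :
  \sum_(a : {ffun V -> 'I_D.+1} | supp a == S) 'X^(\sum_v (a v : nat))
  = gp D ^+ #|S| :> {poly int}.
Proof.
pose F (v : V) (e : 'I_D.+1) : {poly int} :=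
  (((e : nat) != 0%N) == (v \in S))%:R * 'X^e.
have H1 : \prod_v \sum_e F v e = gp D ^+ #|S|.
  rewrite -prodr_const (bigID (mem S)) /= [X in _ * X]big1 ?mulr1.
    apply: eq_bigr => v vS; rewrite /F vS /gp; apply: eq_bigr => e _; by rewrite eqb_id.
  move=> v vS; rewrite /F (negbTE vS) big_ord_recl /= mul1r expr0.
  by rewrite big1 ?addr0 // => i _; rewrite mul0r.
rewrite -H1 bigA_distr_bigA big_mkcond /=; apply: eq_bigr => a _.
rewrite /F big_split /= -expr_sum.
rewrite prod_bool.
have -> : [forall v, ((a v : nat) != 0%N) == (v \in S)] = (supp a == S).
  apply/forallP/eqP => [h|<- v]; last by rewrite inE.
  by apply/setP => v; rewrite inE; have /eqP := h v.
by case: (supp a == S); rewrite ?mul1r ?mul0r.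
Qed.

Lemma HP_sum (V : finType) (adj : rel V) D :
  HP adj D = \sum_(S : {set V} | indep adj S) gp D ^+ #|S|.
Proof.
rewrite /HP (partition_big supp (indep adj)) //=.
apply: eq_bigr => S iS; rewrite -sum_supp; apply: eq_bigl => a.
by case: eqP => [->|]; rewrite ?iS ?andbF.
Qed.

Lemma HP_mono (V : finType) (adj : rel V) D k :
  eqmod D.+1 (HP adj (D + k)) (HP adj D).
Proof.
rewrite !HP_sum; apply: eqmod_sum => S _; apply: eqmod_exp; exact: gp_mono.
Qed.

Lemma indep_le (V : finType) (adj : rel V) (S : {set V}) :
  indep adj S -> (#|S| <= indep_number adj)%N.
Proof. by move=> iS; rewrite /indep_number (@leq_bigmax_cond _ (indep adj) (fun S : {set V} => #|S|) S iS). Qed.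

Lemma hcoef_poly (V : finType) (adj : rel V) k :
  hcoef adj k = ((1 - 'X) ^+ indep_number adj * HP adj k)`_k.
Proof.
rewrite /hcoef coefM.
set al := indep_number adj.
pose F (j : nat) : int := (-1) ^+ j * ('C(al, j))%:Z * (HP adj k)`_(k - j).
transitivity (\sum_(i < al.+1 | (i <= k)%N) F i).
  apply: eq_bigr => i ik; rewrite /F hilb_HP.
  have := HP_mono _ adj (k - i) i; rewrite subnK // => /eqmod_coef ->//.
transitivity (\sum_(j < k.+1) F j); last first.
  by apply: eq_bigr => j _; rewrite coef1X.
rewrite (@big_ord_widen_cond _ _ _ al.+1 (al + k.+1) (fun i => i <= k)%N F) ?ltnS ?leq_addr //.
rewrite (@big_ord_widen _ _ _ k.+1 (al + k.+1) F) ?leq_addl //.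
rewrite big_mkcond [RHS]big_mkcond /=; apply: eq_bigr => i _.
rewrite !ltnS; case: (leqP i k) => ik; case: (leqP i al) => hi; rewrite /= ?andbT ?andbF //=.
all: try by rewrite /F bin_small ?mulr0 ?mul0r.
by rewrite addnS ltnS leq_addr.
Qed.

Lemma hcoef_main (V : finType) (adj : rel V) k :
  hcoef adj k = \sum_(S : {set V} | indep adj S)
     ('X^#|S| * (1 - 'X) ^+ (indep_number adj - #|S|))`_k.
Proof.
rewrite hcoef_poly HP_sum mulr_sumr coef_sum; apply: eq_bigr => S iS.
have le := indep_le _ _ _ iS.
rewrite -{1}(subnK le) exprD -mulrA -exprMn mulrC.
apply: eqmod_coef (ltnSn k); apply: eqmod_mul; last exact: eqmod_refl.
exact: pow_gp.
Qed.

Lemma term_coef al i k : (i <= al)%N ->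
  ('X^i * (1 - 'X) ^+ (al - i) : {poly int})`_k =
  if (k < i)%N then 0 else (-1) ^+ (k - i) * ('C(al - i, k - i))%:Z.
Proof. by move=> _; rewrite coefXnM coef1X. Qed.

Lemma indep_poly_eval (V : finType) (adj : rel V) :
  (indep_poly adj).[-1] = \sum_(S : {set V} | indep adj S) (-1) ^+ #|S|.
Proof.
rewrite /indep_poly horner_poly.
rewrite (partition_big (fun S : {set V} => (inord #|S| : 'I_#|V|.+1)) xpredT) //=.
apply: eq_bigr => i _; rewrite /indep_count -sum1_card.
rewrite (big_morph Posz PoszD (erefl _)) mulr_suml.
apply: eq_big => [S|S]; first rewrite inE.
  case: (boolP (indep adj S)) => //= _.
  have hS : (#|S| < #|V|.+1)%N by rewrite ltnS max_card.
  apply/eqP/eqP => h; last by rewrite -h inordK.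
  by apply: val_inj; rewrite /= inordK.
by rewrite inE => /andP [_ /eqP ->]; rewrite mul1r.
Qed.

Lemma sign_sub a b : (b <= a)%N -> (-1) ^+ (a - b) = (-1) ^+ a * (-1) ^+ b :> int.
Proof.
move=> h; rewrite -{2}(subnK h) exprD -mulrA -exprD.
by rewrite -[(-1) ^+ (b + b)]signr_odd oddD addbb expr0 mulr1.
Qed.

Lemma ainv0 (V : finType) (adj : rel V) :
  (indep_poly adj).[-1] = 1 \/ (indep_poly adj).[-1] = -1 ->
  is_ainv adj 0.
Proof.
move=> hP; set al := indep_number adj.
exists al; split; [|split]; last by rewrite subrr.
  rewrite hcoef_main.
  have -> : \sum_(S : {set V} | indep adj S)
        ('X^#|S| * (1 - 'X) ^+ (al - #|S|))`_al
      = (-1) ^+ al * (indep_poly adj).[-1] :> int.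
    rewrite indep_poly_eval mulr_sumr; apply: eq_bigr => S iS.
    have le := indep_le _ _ _ iS.
    rewrite term_coef // ltnNge le /= binn mulr1.
    exact: sign_sub.
  by case: hP => ->; rewrite ?mulr1 ?mulrN1 ?oppr_eq0 signr_eq0.
move=> k hk; rewrite hcoef_main big1 // => S iS.
have le := indep_le _ _ _ iS.
rewrite term_coef // ltnNge (leq_trans le (ltnW hk)) /= bin_small ?mulr0 //.
by rewrite ltn_sub2r // (leq_ltn_trans le hk).
Qed.


Lemma inv_sum (T : finType) (P : pred T) (phi : T -> T) (w : T -> int) x0 :
  P x0 -> phi x0 = x0 -> involutive phi -> (forall x, P x -> P (phi x)) ->
  (forall x, P x -> x != x0 -> w (phi x) = - w x) ->
  \sum_(x | P x) w x = w x0.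
Proof.
move=> Px0 phx0 inv Pphi hw.
rewrite (bigD1 x0) //=; set R := \sum_(_ | _) _.
suff h : R = - R.
  have : R *+ 2 = 0 by rewrite mulr2n {1}h addNr.
  by move/eqP; rewrite mulrn_eq0 /= => /eqP ->; rewrite addr0.
have hP : forall x, (P (phi x) && (phi x != x0)) = (P x && (x != x0)).
  move=> x; congr (_ && _).
    apply/idP/idP => [/Pphi|/Pphi //]; by rewrite inv.
  congr negb; apply/eqP/eqP => [h|->//]; by rewrite -[x]inv h.
rewrite {1}/R (reindex_inj (inv_inj inv)) /= -sumrN.
apply: eq_big => x; first exact: hP.
by rewrite hP => /andP [Px nx]; apply: hw.
Qed.

Definition tog (T : finType) (a : T) (S : {set T}) : {set T} :=
  if a \in S then S :\ a else a |: S.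
Arguments tog {T} a S.

Lemma in_tog (T : finType) (a b : T) (S : {set T}) :
  (b \in tog a S) = (if b == a then a \notin S else b \in S).
Proof.
rewrite /tog; case: (boolP (a \in S)) => aS; rewrite ?inE;
  case: (eqVneq b a) => [->|]; rewrite ?aS //=.
Qed.

Lemma tog_inv (T : finType) (a : T) (S : {set T}) : tog a (tog a S) = S.
Proof.
apply/setP => b; rewrite !in_tog; case: (eqVneq b a) => [->|//].
by rewrite eqxx negbK.
Qed.

Lemma card_tog (T : finType) (a : T) (S : {set T}) :
  (-1) ^+ #|tog a S| = - (-1) ^+ #|S| :> int.
Proof.
rewrite /tog; case: (boolP (a \in S)) => aS.
  by rewrite [in RHS](cardsD1 a) aS exprS mulN1r opprK.
by rewrite cardsU1 aS exprS mulN1r.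
Qed.

Lemma indep_tog (T : finType) (adj : rel T) (a : T) (S : {set T}) :
  (forall w, adj a w = adj w a) -> ~~ adj a a ->
  (forall w, w \in S -> ~~ adj a w) -> indep adj (tog a S) = indep adj S.
Proof.
move=> sym irr nb; apply/indepP/indepP => h u v uS vS.
  case: (eqVneq u a) => [ua|ua]; first by rewrite ua nb.
  case: (eqVneq v a) => [va|va]; first by rewrite va -sym nb.
  by apply: h; rewrite in_tog ?(negbTE ua) ?(negbTE va).
move: uS vS; rewrite !in_tog.
case: (eqVneq u a) => [->|ua]; case: (eqVneq v a) => [->|va] //= uS vS.
- by rewrite nb.
- by rewrite -sym nb.
- exact: h.
Qed.

Section G.
Context (n m : nat) (c : 'I_n -> 'I_m -> bool) (f : 'I_n -> nat) (t : 'I_m -> nat).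
Context (hf : forall i, (0 < f i)%N).

Local Notation V := (gV f t).
Local Notation adj := (gadj c f t).

Definition xv (i : 'I_n) : V := inl (inl (inl i)).
Definition yv (j : 'I_m) : V := inl (inl (inr j)).
Definition tvt (s : {j : 'I_m & 'I_(t j)}) : V := inr (s, true).
Definition tvf (s : {j : 'I_m & 'I_(t j)}) : V := inr (s, false).
Definition leaf0 (i : 'I_n) : V :=
  inl (inr (@existT _ (fun i => 'I_(f i)) i (Ordinal (hf i)))).

Lemma adj_sym u v : adj u v = adj v u.
Proof. by rewrite /gadj orbC. Qed.

Lemma adj_leaf i w : adj (leaf0 i) w -> w = xv i.
Proof.
by case: w => [[[x|y]|l]|[s []]] //=; rewrite /gadj /= => /eqP ->.
Qed.

Lemma adj_tvf s w : adj (tvf s) w -> w = tvt s \/ w = yv (tag s).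
Proof.
case: w => [[[x|y]|l]|[s' [|]]] //=; rewrite /gadj /=.
  by move=> /eqP <-; right.
by rewrite orbF => /eqP <-; left.
Qed.

Lemma adj_xy x y : adj (xv x) (yv y) = c x y.
Proof. by rewrite /gadj /= orbF. Qed.

Lemma adj_xl l : adj (xv (tag l)) (inl (inr l)).
Proof. by rewrite /gadj /= eqxx. Qed.

Lemma adj_ft s : adj (tvf s) (tvt s).
Proof. by rewrite /gadj /= eqxx. Qed.

Lemma irr_leaf i : ~~ adj (leaf0 i) (leaf0 i).
Proof. by []. Qed.

Lemma irr_tvf s : ~~ adj (tvf s) (tvf s).
Proof. by []. Qed.


Definition pickx (S : {set V}) := [pick i | xv i \notin S].
Definition pickt (S : {set V}) := [pick s | tvt s \notin S].

Definition phi (S : {set V}) : {set V} :=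
  match pickx S with
  | Some i => tog (leaf0 i) S
  | None => match pickt S with Some s => tog (tvf s) S | None => S end
  end.

Lemma pickx_tog a S : (forall i, xv i != a) -> pickx (tog a S) = pickx S.
Proof. by move=> h; apply: eq_pick => i /=; rewrite in_tog (negbTE (h i)). Qed.

Lemma pickt_tog a S : (forall s, tvt s != a) -> pickt (tog a S) = pickt S.
Proof. by move=> h; apply: eq_pick => i /=; rewrite in_tog (negbTE (h i)). Qed.

Lemma pickx_some S i : pickx S = Some i -> xv i \notin S.
Proof. by rewrite /pickx; case: pickP => // j hj [<-]. Qed.

Lemma pickt_some S s : pickt S = Some s -> tvt s \notin S.
Proof. by rewrite /pickt; case: pickP => // j hj [<-]. Qed.

Lemma pickx_none S : pickx S = None -> forall i, xv i \in S.
Proof. by rewrite /pickx; case: pickP => // h _ i; have := h i => /= /negbFE. Qed.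

Lemma pickt_none S : pickt S = None -> forall s, tvt s \in S.
Proof. by rewrite /pickt; case: pickP => // h _ i; have := h i => /= /negbFE. Qed.

Lemma phi_inv : involutive phi.
Proof.
move=> S; rewrite /phi.
case E: (pickx S) => [i|].
  by rewrite pickx_tog ?E ?tog_inv // => j.
case E2: (pickt S) => [s|]; last by rewrite E E2.
rewrite pickx_tog; last by move=> j.
rewrite E pickt_tog; last by move=> j; apply/eqP; case.
by rewrite E2 tog_inv.
Qed.


Lemma tvt_neq_leaf s i : tvt s != leaf0 i. Proof. by apply/eqP. Qed.

Hypothesis hy : forall y : 'I_m, exists x, c x y.

Lemma y_notin S y : indep adj S -> (forall i, xv i \in S) -> yv y \notin S.
Proof.
move=> /indepP iS hx; apply/negP => yS.
have [x cxy] := hy y.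
by have := iS _ _ (hx x) yS; rewrite adj_xy cxy.
Qed.

Lemma phi_indep S : indep adj S -> indep adj (phi S).
Proof.
move=> iS; rewrite /phi.
case E: (pickx S) => [i|].
  rewrite indep_tog //; first exact: adj_sym.
  move=> w wS; apply/negP => /adj_leaf ew; move: wS; rewrite ew.
  by rewrite (negbTE (pickx_some _ _ E)).
case E2: (pickt S) => [s|] //.
rewrite indep_tog //; first exact: adj_sym.
move=> w wS; apply/negP => /adj_tvf [ew|ew]; move: wS; rewrite ew.
  by rewrite (negbTE (pickt_some _ _ E2)).
by rewrite (negbTE (y_notin _ _ iS (pickx_none _ E))).
Qed.

Definition fixedp (w : V) : bool :=
  match w with
  | inl (inl (inl _)) => true
  | inr (_, true) => true
  | _ => false
  end.

Definition S0 : {set V} := [set w | fixedp w].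

Lemma S0_indep : indep adj S0.
Proof.
apply/indepP => u v; rewrite !inE.
by case: u => [[[x|y]|l]|[s [|]]]; case: v => [[[x'|y']|l']|[s' [|]]].
Qed.

Lemma phi_S0 : phi S0 = S0.
Proof.
rewrite /phi /pickx /pickt.
case: pickP => [i|_]; first by rewrite inE.
by case: pickP => [s|_] //; rewrite inE.
Qed.

Lemma phi_fixed S : indep adj S -> phi S = S -> S = S0.
Proof.
move=> iS; rewrite /phi.
case E: (pickx S) => [i|].
  move=> /setP /(_ (leaf0 i)); rewrite in_tog eqxx.
  by case: (leaf0 i \in S).
case E2: (pickt S) => [s|] => [|_].
  move=> /setP /(_ (tvf s)); rewrite in_tog eqxx.
  by case: (tvf s \in S).
have hx := pickx_none _ E; have ht := pickt_none _ E2.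
move/indepP: (iS) => iS'.
apply/setP => w; rewrite inE.
case: w => [[[x|y]|l]|[s' [|]]] /=.
- exact: hx.
- exact/negbTE/(y_notin _ _ iS hx).
- apply/negbTE/negP => lS.
  by have := iS' _ _ (hx (tag l)) lS; rewrite adj_xl.
- exact: ht.
- apply/negbTE/negP => fS.
  by have := iS' _ _ fS (ht s'); rewrite adj_ft.
Qed.

Lemma sum_main :
  \sum_(S : {set V} | indep adj S) (-1) ^+ #|S| = (-1) ^+ #|S0| :> int.
Proof.
apply: (@inv_sum _ _ phi) => //.
- exact: S0_indep.
- exact: phi_S0.
- exact: phi_inv.
- exact: phi_indep.
move=> S iS nS; rewrite /phi.
case E: (pickx S) => [i|]; first exact: card_tog.
case E2: (pickt S) => [s|]; first exact: card_tog.
by case/eqP: nS; apply: phi_fixed => //; rewrite /phi E E2.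
Qed.

End G.

Lemma card_S0 (n m : nat) (f : 'I_n -> nat) (t : 'I_m -> nat) :
  #|S0 n m f t| = (n + \sum_(j < m) t j)%N.
Proof.
rewrite -sum1_card big_mkcond /= !big_sumType /=.
rewrite [X in (X + _ + _ + _)%N](eq_bigr (fun _ => 1%N)) => [|x _]; last by rewrite inE.
rewrite sum1_card card_ord.
rewrite [X in (_ + X + _ + _)%N]big1 => [|y _]; last by rewrite inE.
rewrite [X in (_ + _ + X + _)%N]big1 => [|y _]; last by rewrite inE.
transitivity (n + \sum_(s : {j : 'I_m & 'I_(t j)}) \sum_(b : bool) nat_of_bool b)%N.
  congr (_ + _)%N; first by rewrite !addn0.
  rewrite pair_bigA /=; apply: eq_bigr => -[s b] _.
  by rewrite inE; case: b.
have -> : (\sum_(s : {j : 'I_m & 'I_(t j)}) \sum_(b : bool) nat_of_bool b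
    = #|{: {j : 'I_m & 'I_(t j)}}|)%N.
  by rewrite -sum1_card; apply: eq_bigr => s _; rewrite big_bool.
rewrite card_tagged sumnE big_map big_enum /=.
by congr (_ + _)%N; apply: eq_bigr => j _; rewrite card_ord.
Qed.

Lemma y_nb (n m : nat) (c : 'I_n -> 'I_m -> bool) :
  (0 < n)%N -> core_connected c -> forall y, exists x, c x y.
Proof.
move=> hn conn y.
case: (pickP (fun x => c x y)) => [x cx | h]; first by exists x.
exfalso; have := conn (inr y) (inl (Ordinal hn)).
case/connectP => -[|z p] //= /andP [hz _].
by case: z hz => [x|y'] //=; rewrite h.
Qed.

Close Scope ring_scope.

Theorem theorem4p3 (n m : nat) (c : 'I_n -> 'I_m -> bool)
    (f : 'I_n -> nat) (t : 'I_m -> nat) :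
  (0 < n)%N -> (0 < m)%N -> core_connected c ->
  (forall i, (0 < f i)%N) ->
  ((indep_poly (gadj c f t)).[-1] = (-1) ^+ (n + \sum_(j < m) t j))%R
  /\ is_ainv (gadj c f t) 0%R.
Proof.
move=> hn hm conn hf.
have hy := y_nb _ _ _ hn conn.
have E : ((indep_poly (gadj c f t)).[-1] = (-1) ^+ (n + \sum_(j < m) t j))%R.
  by rewrite indep_poly_eval (sum_main _ _ _ _ _ hf hy) card_S0.
split => //; apply: ainv0; rewrite E -signr_odd.
by case: (odd _); [right; rewrite expr1 | left; rewrite expr0].
Qed.
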